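(* Let $\mathcal{P}\subset K[x_1,\ldots,x_n]$ be a chordal polynomial set with $x_1<\cdots<x_n$ as a perfect elimination ordering. Let $\overline{\mathrm{red}}_n(\mathcal{P}),\ldots,\overline{\mathrm{red}}_1(\mathcal{P})$ be any successive reduction of $\mathcal{P}$, with arbitrary valid reduction data at each step. Then for each $i\in\{n,\ldots,1\}$ and any two distinct variables $x_p,x_q$ the following holds: if there is an integer $k$ with $x_p,x_q\in\mathrm{supp}\big(\overline{\mathrm{red}}_i(\mathcal{P})^{(k)}\big)$, then $\{x_p,x_q\}$ is an edge of $G(\mathcal{P})$.
   Context: Let $K$ be a field and $K[x_1,\ldots,x_n]$ the polynomial ring, with the variables ordered $x_1<\cdots<x_n$. For a polynomial $F$, $\mathrm{supp}(F)$ is the set of variables effectively appearing in $F$. For a set of polynomials $\mathcal{P}$, $\mathrm{supp}(\mathcal{P})=\bigcup_{F\in\mathcal{P}}\mathrm{supp}(F)$. For a nonconstant $F$, $\mathrm{lv}(F)$ is the greatest variable in $\mathrm{supp}(F)$. For a polynomial set $\mathcal{P}$ and $1\le i\le n$, $\mathcal{P}^{(i)}=\{P\in\mathcal{P}:\mathrm{lv}(P)=x_i\}$; constants belong to no $\mathcal{P}^{(i)}$. The associated graph $G(\mathcal{P})$ is the undirected graph whose vertex set is $\mathrm{supp}(\mathcal{P})$, with an edge between distinct $x_i,x_j$ iff some $F\in\mathcal{P}$ has $x_i,x_j\in\mathrm{supp}(F)$. An ordering of the vertices of a graph is a perfect elimination ordering if, for every vertex $v$, the set consisting of $v$ and all neighbours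 of $v$ smaller than $v$ is a clique. A polynomial set $\mathcal{P}$ is called chordal with $x_1<\cdots<x_n$ as a perfect elimination ordering if the restriction of this ordering to $\mathrm{supp}(\mathcal{P})$ is a perfect elimination ordering of $G(\mathcal{P})$. Reduction step: let $\mathcal{S}$ be a polynomial set and $1\le i\le n$ with $\mathcal{S}^{(i)}\neq\emptyset$. Reduction data for $(\mathcal{S},i)$ is a pair $(T_i,\mathcal{R}_i)$ such that: - $T_i\in K[x_1,\ldots,x_i]\setminus K[x_1,\ldots,x_{i-1}]$ and $\mathcal{R}_i\subset K[x_1,\ldots,x_{i-1}]$, where $K[x_1,\ldots,x_0]=K$; - $\mathrm{supp}(T_i)\subseteq\mathrm{supp}(\mathcal{S}^{(i)})$ and $\mathrm{supp}(\mathcal{R}_i)\subseteq\mathrm{supp}(\mathcal{S}^{(i)})$. Given such a pair, $$\mathrm{red}_i(\mathcal{S})=\bigcup_{j>i}\mathcal{S}^{(j)}\ \cup\ \{T_i\}\ \cup\ \bigcup_{j<i}\big(\mathcal{S}^{(j)}\cup\mathcal{R}_i^{(j)}\big).$$ If $\mathcal{S}^{(i)}=\emptyset$, set $\mathrm{red}_i(\mathcal{S})=\bigcup_{j}\mathcal{S}^{(j)}$. Successive reduction: $\overline{\mathrm{red}}_{n+1}(\mathcal{P})=\mathcal{P}$ and $\overline{\mathrm{red}}_i(\mathcal{P})=\mathrm{red}_i(\overline{\mathrm{red}}_{i+1}(\mathcal{P}))$ for $i=n,\ldots,1$. At each step some reduction data for $(\overline{\mathrm{red}}_{i+1}(\mathcal{P}),i)$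 is chosen. *)

(* Defs.v *)
(* Variable x_{i+1} of the paper is the ordinal i : 'I_n (0-based),
   and the variable order x_1 < ... < x_n is the order of ordinals. *)
From HB Require Import structures.
From mathcomp Require Import all_boot all_order all_algebra.
Set Implicit Arguments. Unset Strict Implicit. Unset Printing Implicit Defensive.
Import GRing.Theory.
Local Open Scope ring_scope.

Section MPoly.
Variables (K : fieldType) (n : nat).

Definition mono := {ffun 'I_n -> nat}.

Record mpoly := MPoly {
  mcoef : mono -> K;
  mfin : exists s : seq mono, forall m, mcoef m != 0 -> m \in s }.

Definition in_supp (F : mpoly) (i : 'I_n) : Prop :=
  exists m : mono, mcoef F m != 0 /\ (0 < m i)%N.

Definition pset := mpoly -> Prop.

Definition lv_is (F : mpoly) (i : 'I_n) : Prop :=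
  in_supp F i /\ forall j, in_supp F j -> (j <= i)%N.

Definition level (P : pset) (i : 'I_n) : pset :=
  fun F => P F /\ lv_is F i.

Definition in_supp_set (P : pset) (i : 'I_n) : Prop :=
  exists F, P F /\ in_supp F i.

Definition adj (P : pset) (p q : 'I_n) : Prop :=
  p <> q /\ exists F, P F /\ in_supp F p /\ in_supp F q.

(* x_1 < ... < x_n (restricted to supp P) is a perfect elimination ordering
   of G(P): for every vertex v, v together with its smaller neighbours
   forms a clique. *)
Definition chordal_peo (P : pset) : Prop :=
  forall v : 'I_n, in_supp_set P v ->
    forall u w : 'I_n,
      (u = v \/ (adj P u v /\ (u < v)%N)) ->
      (w = v \/ (adj P w v /\ (w < v)%N)) ->
      u <> w -> adj P u w.

Definition red_data (S : pset) (i : 'I_n) (T : mpoly) (R : pset) : Prop :=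
  (in_supp T i /\ forall j, in_supp T j -> (j <= i)%N) /\
  (forall G, R G -> forall j, in_supp G j -> (j < i)%N) /\
  (forall j, in_supp T j -> in_supp_set (level S i) j) /\
  (forall G, R G -> forall j, in_supp G j -> in_supp_set (level S i) j).

Definition red_with (S : pset) (i : 'I_n) (T : mpoly) (R : pset) : pset :=
  fun F =>
    (exists j : 'I_n, (i < j)%N /\ level S j F) \/
    F = T \/
    (exists j : 'I_n, (j < i)%N /\ (level S j F \/ level R j F)).

Definition nonconst_part (S : pset) : pset :=
  fun F => exists j : 'I_n, level S j F.

Definition is_red (S : pset) (i : 'I_n) (S' : pset) : Prop :=
  ((forall F, ~ level S i F) -> forall F, S' F <-> nonconst_part S F) /\
  ((exists F, level S i F) ->
     exists T R, red_data S i T R /\ forall F, S' F <-> red_with S i T R F).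

(* Successive reduction: Sr k (0-based) stands for \overline{red}_{k+1}(P),
   Sr n = \overline{red}_{n+1}(P) = P,
   Sr i = red_{i+1}(Sr (i+1)) for i : 'I_n (variable x_{i+1}). *)
Definition successive_reduction (P : pset) (Sr : nat -> pset) : Prop :=
  (forall F, Sr n F <-> P F) /\
  forall i : 'I_n, is_red (Sr i.+1) i (Sr i).

End MPoly.

(* Main.v *)
Require Import Defs.
From HB Require Import structures.
From mathcomp Require Import all_boot all_order all_algebra.
From mathcomp Require Import zify.
From Stdlib Require Import Classical.

Section Pf.
Variables (K : fieldType) (n : nat).

Definition Inv (P S : pset K n) := forall k p q : 'I_n, p <> q ->
  in_supp_set (level S k) p -> in_supp_set (level S k) q -> adj P p q.

Lemma lv_uniq {F : mpoly K n} {i j : 'I_n} : lv_is F i -> lv_is F j -> i = j.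
Proof.
move=> [Hi Hi'] [Hj Hj']; apply: val_inj => /=.
have := Hi' _ Hj; have := Hj' _ Hi. lia.
Qed.

Lemma adj_sym (P : pset K n) p q : adj P p q -> adj P q p.
Proof. by move=> [ne [F [HF [h1 h2]]]]; split; [auto|exists F]. Qed.

Lemma ord_neq_lt (r k : 'I_n) : r <> k -> (r <= k)%N -> (r < k)%N.
Proof.
move=> ne le; have ne' : (r : nat) <> k by move=> h; apply: ne; apply: val_inj.
lia.
Qed.

Lemma supp_le {S : pset K n} {k p : 'I_n} : in_supp_set (level S k) p -> (p <= k)%N.
Proof. by move=> [F [[_ [_ L]] sp]]; apply: L. Qed.

Lemma supp_self {S : pset K n} {k p : 'I_n} : in_supp_set (level S k) p ->
  in_supp_set (level S k) k.
Proof. by move=> [F [[SF [L1 L2]] sp]]; exists F. Qed.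

Lemma base (P S : pset K n) : chordal_peo P -> (forall F, S F <-> P F) -> Inv P S.
Proof.
move=> HP HS k p q Hpq [F1 [[S1 L1] s1]] [F2 [[S2 L2] s2]].
have key : forall r F, P F -> lv_is F k -> in_supp F r ->
    r = k \/ (adj P r k /\ (r < k)%N).
  move=> r F PF [Lk Lle] sr.
  case: (classic (r = k)) => [->|ne]; [by left|right].
  split; last by apply: ord_neq_lt => //; apply: Lle.
  by split => //; exists F.
apply: (HP k) => //.
- by exists F1; split => //; [apply/HS | case: L1].
- by apply: (key p F1) => //; apply/HS.
- by apply: (key q F2) => //; apply/HS.
Qed.

Lemma cross {P S : pset K n} {i k p q : 'I_n} : chordal_peo P -> Inv P S ->
  in_supp_set (level S k) p -> in_supp_set (level S i) q ->
  in_supp_set (level S i) k -> (q <= k)%N -> p <> q -> adj P p q.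
Proof.
move=> HP HI Hp Hq Hk qk pq.
have kk := supp_self Hp.
case: (classic (p = k)) => [E|pk].
  subst p; apply: adj_sym; apply: (HI i) => //; auto.
case: (classic (q = k)) => [E|qk'].
  by subst q; apply: (HI k).
have apk : adj P p k by apply: (HI k).
have aqk : adj P q k by apply: (HI i).
have vin : in_supp_set P k.
  by case: apk => _ [F [PF [_ h]]]; exists F.
apply: (HP k vin) => //; right; split => //; apply: ord_neq_lt => //.
exact: (supp_le Hp).
Qed.

Lemma step (P S S' : pset K n) (i : 'I_n) : chordal_peo P -> Inv P S ->
  is_red S i S' -> Inv P S'.
Proof.
move=> HP HI [Hno Hyes] k p q Hpq Hp Hq.
case: (classic (exists F, level S i F)) => [Hex|Hnex].
- have [T [R [Hd Heq]]] := Hyes Hex.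
  have [[Ti Tle] [Rlt [Tsub Rsub]]] := Hd.
  have cls : forall r, in_supp_set (level S' k) r ->
     in_supp_set (level S k) r \/
     (in_supp_set (level S i) r /\ in_supp_set (level S i) k /\ (r <= k)%N).
    move=> r [F [[HF Lk] sr]].
    have rk : (r <= k)%N by case: Lk => _ L; apply: L.
    move/Heq: HF => [[j [ij [Sj Lj]]] | [ET | [j [ji [[Sj Lj]|[Rj Lj]]]]]].
    + left; have E := lv_uniq Lj Lk; subst j; by exists F.
    + subst F; right; have E : i = k by apply: (lv_uniq (conj Ti Tle) Lk).
      subst k; split; first by apply: Tsub.
      by split => //; apply: Tsub.
    + left; have E := lv_uniq Lj Lk; subst j; by exists F.
    + right; have E := lv_uniq Lj Lk; subst j.
      split; first by apply: (Rsub F).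
      by split => //; apply: (Rsub F) => //; case: Lk.
  case: (cls p Hp) => [Ap|[Bp [Bk pk]]]; case: (cls q Hq) => [Aq|[Bq [Bk' qk]]].
  + by apply: (HI k).
  + by apply: (cross HP HI Ap Bq Bk').
  + by apply: adj_sym; apply: (cross HP HI Aq Bp Bk) => //; auto.
  + by apply: (HI i).
- have HS := Hno (fun F h => Hnex (ex_intro _ F h)).
  have tr : forall r, in_supp_set (level S' k) r -> in_supp_set (level S k) r.
    move=> r [F [[HF Lk] sr]]; move/HS: HF => [j [Sj Lj]].
    have E := lv_uniq Lj Lk; subst j; by exists F.
  by apply: (HI k) => //; apply: tr.
Qed.

End Pf.
Arguments Inv {K n}.
Arguments base {K n P S}.
Arguments step {K n P S S' i}.

Theorem lemma3p4 (K : fieldType) (n : nat) (P : pset K n) (Sr : nat -> pset K n) :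
  chordal_peo P ->
  successive_reduction P Sr ->
  forall i : 'I_n, forall p q : 'I_n, p <> q ->
    (exists k : 'I_n, in_supp_set (level (Sr i) k) p /\
                      in_supp_set (level (Sr i) k) q) ->
    adj P p q.
Proof.
move=> HP [H0 Hs].
have all : forall d m, (m + d = n)%N -> Inv P (Sr m).
  elim=> [|d IH] m E.
    rewrite addn0 in E; subst m; exact: base.
  have mn : (m < n)%N by lia.
  apply: (step HP (IH m.+1 _) (Hs (Ordinal mn))); lia.
move=> i p q pq [k [h1 h2]].
have := all (n - i)%N i _ k p q pq h1 h2; apply.
have := ltn_ord i; lia.
Qed.
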